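(* Let $\mathcal{A}*\mathcal{X}=\mathcal{B}$ be a consistent tensor system with unique solution $\mathcal{X}^*$, where $\mathcal{A}\in\mathbb{R}^{n_1\times n_2\times n}$ and $\mathcal{B}\in\mathbb{R}^{n_1\times n_3\times n}$. Let $\alpha>0$ and $$\kappa=\max_{i=1,\dots,n}\|\mathcal{I}-\alpha\tilde{\mathcal{A}}_i^T*\tilde{\mathcal{A}}_i\|_{op},\qquad \mu=\max_{i,j\in\{1,\dots,n\},\,i\neq j}\|\tilde{\mathcal{A}}_i^T*\tilde{\mathcal{A}}_j\|_{op}.$$ If $\kappa+\alpha\mu(n-1)<1$, then the iterates $\mathcal{X}(t)$ of cyclic frontal slice descent (block size $1$) with learning rate $\alpha$ satisfy $\mathcal{E}(t)=\|\mathcal{X}(t)-\mathcal{X}^*\|_F^2\to 0$ as $t\to\infty$.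
   Context: For $\mathcal{A}\in\mathbb{R}^{n_1\times n_2\times n}$ with frontal slices $A_k=\mathcal{A}(:,:,k)$: $\mathrm{unfold}(\mathcal{A})$ stacks $A_1,\dots,A_n$ vertically, $\mathrm{fold}$ is its inverse, $\mathrm{bcirc}(\mathcal{A})$ is the $n_1n\times n_2n$ block-circulant matrix with $(p,q)$ block $A_{((p-q)\bmod n)+1}$, and the t-product is $\mathcal{A}*\mathcal{X}=\mathrm{fold}(\mathrm{bcirc}(\mathcal{A})\mathrm{unfold}(\mathcal{X}))$. The identity tensor $\mathcal{I}$ has first frontal slice equal to the identity matrix and all other frontal slices zero. The transpose $\mathcal{A}^T$ transposes each frontal slice and reverses the order of slices $2,\dots,n$. $\|\cdot\|_F$ is the entrywise Frobenius norm and $\|\mathcal{C}\|_{op}=\sup_{\|\mathcal{X}\|_F=1}\|\mathcal{C}*\mathcal{X}\|_F=\|\mathrm{bcirc}(\mathcal{C})\|_2$. For $k\in\{1,\dots,n\}$, $\tilde{\mathcal{A}}_k\in\mathbb{R}^{n_1\times n_2\times n}$ has $k$-th frontal slice $A_k$ and all other frontal slices zero. Cyclic frontal slice descent with learning rate $\alpha$: set $\mathcal{X}(t)=0$ for all $t\le 0$; for $t=0,1,2,\dots$ let $\mathcal{R}(t+1)=\mathcal{B}-\sum_{j=0}^{n-1}\tilde{\mathcal{A}}_{((t-j)\bmod n)+1}*\mathcal{X}(t-j)$ and $\mathcal{X}(t+1)=\mathcal{X}(t)+\alpha\,\tilde{\mathcal{A}}_{(t\bmod n)+1}^T*\mathcal{R}(t+1)$.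 *)

(* Defs.v *)
From HB Require Import structures.
From mathcomp Require Import all_boot all_order all_algebra.
From mathcomp Require Import all_classical all_reals all_analysis.
Set Implicit Arguments. Unset Strict Implicit. Unset Printing Implicit Defensive.
Import Order.TTheory GRing.Theory Num.Theory.
Local Open Scope ring_scope.

Section Tensors.
Variable R : realType.

(* a real third-order tensor in R^{a x b x n}: its n frontal slices (0-based) *)
Definition tensor (a b n : nat) := 'I_n -> 'M[R]_(a, b).

Definition tzero a b n : tensor a b n := fun _ => 0.
Definition tadd a b n (X Y : tensor a b n) : tensor a b n := fun k => X k + Y k.
Definition tsub a b n (X Y : tensor a b n) : tensor a b n := fun k => X k - Y k.
Definition tscale a b n (c : R) (X : tensor a b n) : tensor a b n :=
  fun k => c *: X k.

Lemma subo_proof n (p q : 'I_n) : ((p + n - q) %% n < n)%N.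
Proof. by rewrite ltn_mod (leq_ltn_trans (leq0n p) (ltn_ord p)). Qed.
Definition subo n (p q : 'I_n) : 'I_n := Ordinal (subo_proof p q).

(* t-product: fold (bcirc A * unfold X); block (p,q) of bcirc A is A_((p-q) mod n) *)
Definition tprod a b c n (A : tensor a b n) (X : tensor b c n) : tensor a c n :=
  fun p => \sum_(q < n) A (subo p q) *m X q.

Definition tid a n : tensor a a n :=
  fun k => if val k == 0%N then 1%:M else 0.

(* transpose: transpose each slice, reverse slices 2..n;
   slice k (0-based) of A^T is (A_((0 - k) mod n))^T; note subo k k has value 0 *)
Definition ttr a b n (A : tensor a b n) : tensor b a n :=
  fun k => (A (subo (subo k k) k))^T.

(* \tilde A_k for a 0-based slice index k (as a nat): keep slice k, zero the rest *)
Definition tslice a b n (A : tensor a b n) (k : nat) : tensor a b n :=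
  fun j => if val j == k then A j else 0.

Definition frob2 a b n (X : tensor a b n) : R :=
  \sum_(k < n) \sum_(i < a) \sum_(j < b) X k i j ^+ 2.

(* operator norm sup_{||X||_F = 1} ||C * X||_F = ||bcirc C||_2, with X ranging over
   tensors with a single lateral slice (i.e. X = fold of a vector) *)
Definition topnorm a b n (C : tensor a b n) : R :=
  sup [set r : R | exists X : tensor b 1 n,
         frob2 X = 1 /\ r = Num.sqrt (frob2 (tprod C X))].

Definition kappa a b n (alpha : R) (A : tensor a b n) : R :=
  \big[Num.max/0]_(i < n)
     topnorm (tsub (@tid b n) (tscale alpha (tprod (ttr (tslice A i)) (tslice A i)))).

Definition mu a b n (A : tensor a b n) : R :=
  \big[Num.max/0]_(i < n) \big[Num.max/0]_(j < n | i != j)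
     topnorm (tprod (ttr (tslice A i)) (tslice A j)).

(* Cyclic frontal slice descent. hist t = [:: X(t); X(t-1); ...; X(0)],
   so that nth (tzero) (hist t) j = X(t-j), which is 0 when t - j < 0. *)
Definition cfsd_step a b c n (alpha : R) (A : tensor a b n) (B : tensor a c n)
    (t : nat) (h : seq (tensor b c n)) : tensor b c n :=
  let Res := tsub B (\big[@tadd a c n/@tzero a c n]_(j < n)
                        tprod (tslice A ((t + n - j) %% n)%N) (nth (@tzero b c n) h j)) in
  tadd (head (@tzero b c n) h)
       (tscale alpha (tprod (ttr (tslice A (t %% n)%N)) Res)).

Fixpoint cfsd_hist a b c n (alpha : R) (A : tensor a b n) (B : tensor a c n)
    (t : nat) : seq (tensor b c n) :=
  match t with
  | 0 => [:: @tzero b c n]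
  | t'.+1 => let h := cfsd_hist alpha A B t' in cfsd_step alpha A B t' h :: h
  end.

Definition cfsd a b c n (alpha : R) (A : tensor a b n) (B : tensor a c n)
    (t : nat) : tensor b c n :=
  head (@tzero b c n) (cfsd_hist alpha A B t).

End Tensors.

(* Main.v *)
Require Import Defs.
From mathcomp Require Import all_boot all_order all_algebra.
From mathcomp Require Import all_classical all_reals all_analysis.
From mathcomp Require Import ring lra.
Import Order.TTheory GRing.Theory Num.Theory.
Set Implicit Arguments. Unset Strict Implicit. Unset Printing Implicit Defensive.
Local Open Scope classical_set_scope.
Local Open Scope ring_scope.

Lemma cs_sum (R : realType) (I : finType) (f g : I -> R) :
  (\sum_i f i * g i) ^+ 2 <= (\sum_i f i ^+ 2) * (\sum_i g i ^+ 2).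
Proof.
set a := \sum_i f i ^+ 2; set b := \sum_i f i * g i; set c := \sum_i g i ^+ 2.
have a0 : 0 <= a by apply: sumr_ge0 => i _; exact: sqr_ge0.
have key : \sum_i (a * g i - b * f i) ^+ 2 = a * (a * c - b ^+ 2).
  have -> : \sum_i (a * g i - b * f i) ^+ 2 =
     \sum_i (a ^+ 2 * g i ^+ 2 - (2 * a * b) * (f i * g i) + b ^+ 2 * f i ^+ 2).
    by apply: eq_bigr => i _; ring.
  rewrite big_split sumrB /= -!mulr_sumr -/a -/b -/c; ring.
have : 0 <= a * (a * c - b ^+ 2).
  by rewrite -key; apply: sumr_ge0 => i _; exact: sqr_ge0.
have [apos|] := ltrP 0 a.
  by rewrite pmulr_rge0 // subr_ge0.
move=> ale0 _; have a00 : a = 0 by apply/eqP; rewrite eq_le ale0 a0.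
have f0 : forall i, f i = 0.
  move=> i; apply/eqP; rewrite -sqrf_eq0; apply/eqP.
  by apply: (psumr_eq0P (P := predT) _ a00) => // j _; exact: sqr_ge0.
have -> : b = 0 by rewrite /b big1 // => i _; rewrite f0 mul0r.
by rewrite a00 expr0n /= mul0r.
Qed.

Lemma mink_sum (R : realType) (I : finType) (f g : I -> R) :
  Num.sqrt (\sum_i (f i + g i) ^+ 2) <=
  Num.sqrt (\sum_i f i ^+ 2) + Num.sqrt (\sum_i g i ^+ 2).
Proof.
set a := \sum_i f i ^+ 2; set b := \sum_i f i * g i; set c := \sum_i g i ^+ 2.
have a0 : 0 <= a by apply: sumr_ge0 => i _; exact: sqr_ge0.
have c0 : 0 <= c by apply: sumr_ge0 => i _; exact: sqr_ge0.
have -> : \sum_i (f i + g i) ^+ 2 = a + 2 * b + c.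
  have -> : \sum_i (f i + g i) ^+ 2 = \sum_i (f i ^+ 2 + 2 * (f i * g i) + g i ^+ 2).
    by apply: eq_bigr => i _; ring.
  by rewrite !big_split /= -mulr_sumr.
have hb : b <= Num.sqrt a * Num.sqrt c.
  apply: le_trans (ler_norm b) _.
  rewrite -sqrtr_sqr -sqrtrM //; apply: ler_wsqrtr; exact: cs_sum.
rewrite -(ger0_norm (addr_ge0 (sqrtr_ge0 a) (sqrtr_ge0 c))) -sqrtr_sqr.
rewrite ler_sqrt ?sqr_ge0 // sqrrD !sqr_sqrtr //.
lra.
Qed.

Definition fn (R : realType) a b n (X : tensor R a b n) := Num.sqrt (frob2 X).

Lemma frob2_flat (R : realType) a b n (X : tensor R a b n) :
  frob2 X = \sum_(p : 'I_n * ('I_a * 'I_b)) X p.1 p.2.1 p.2.2 ^+ 2.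
Proof. by rewrite /frob2; under eq_bigr do rewrite pair_big; rewrite pair_big. Qed.

Lemma frob2_ge0 (R : realType) a b n (X : tensor R a b n) : 0 <= frob2 X.
Proof. by rewrite frob2_flat; apply: sumr_ge0 => i _; exact: sqr_ge0. Qed.

Lemma fn_ge0 (R : realType) a b n (X : tensor R a b n) : 0 <= fn X.
Proof. exact: sqrtr_ge0. Qed.

Lemma fn_add (R : realType) a b n (X Y : tensor R a b n) :
  fn (fun k => X k + Y k) <= fn X + fn Y.
Proof.
rewrite /fn !frob2_flat; under eq_bigr do rewrite mxE; exact: mink_sum.
Qed.

Lemma frob2_scale (R : realType) a b n (c : R) (X : tensor R a b n) :
  frob2 (fun k => c *: X k) = c ^+ 2 * frob2 X.
Proof.
rewrite !frob2_flat mulr_sumr; apply: eq_bigr => p _; by rewrite mxE exprMn.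
Qed.

Lemma fn_scale (R : realType) a b n (c : R) (X : tensor R a b n) :
  fn (fun k => c *: X k) = `|c| * fn X.
Proof. by rewrite /fn frob2_scale sqrtrM ?sqr_ge0 // sqrtr_sqr. Qed.

Lemma frob2_zero (R : realType) a b n : frob2 (fun _ : 'I_n => 0 : 'M[R]_(a, b)) = 0.
Proof. by rewrite frob2_flat big1 // => p _; rewrite mxE expr0n. Qed.

Lemma fn_sum (R : realType) a b n m (Y : 'I_m -> tensor R a b n) :
  fn (fun k => \sum_(j < m) Y j k) <= \sum_(j < m) fn (Y j).
Proof.
elim: m Y => [|m IH] Y.
  have -> : (fun k => \sum_(j < 0) Y j k) = (fun k => 0).
    by apply: funext => k; rewrite big_ord0.
  by rewrite big_ord0 /fn frob2_zero sqrtr0.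
have -> : (fun k => \sum_(j < m.+1) Y j k) =
   (fun k => (fun k => \sum_(j < m) Y (widen_ord (leqnSn m) j) k) k + Y ord_max k).
  by apply: funext => k; rewrite big_ord_recr.
rewrite big_ord_recr /=; apply: le_trans (fn_add _ _) _.
by rewrite lerD2r; exact: IH.
Qed.

Lemma fn_comb (R : realType) a b n m (c : R) (X : tensor R a b n) (Y : 'I_m -> tensor R a b n) :
  0 <= c ->
  fn (fun p => X p - c *: \sum_(j < m) Y j p) <= fn X + c * \sum_(j < m) fn (Y j).
Proof.
move=> c0.
have -> : (fun p => X p - c *: \sum_(j < m) Y j p) =
   (fun p => X p + (fun p => (- c) *: (fun p => \sum_(j < m) Y j p) p) p).
  by apply: funext => p; rewrite scaleNr.
apply: le_trans (fn_add _ _) _; rewrite lerD2l fn_scale normrN ger0_norm //.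
by rewrite ler_wpM2l //; exact: fn_sum.
Qed.

Lemma subo_Zp n' (p q : 'I_n'.+1) : subo p q = p - q.
Proof.
apply: val_inj => /=; rewrite modnDmr addnBA //; exact: ltnW.
Qed.

Lemma valZp_sub n' t (j : 'I_n'.+1) :
  val (inZp t - j : 'I_n'.+1) = ((t + n'.+1 - j) %% n'.+1)%N.
Proof. by rewrite /= modnDm addnBA //; exact: ltnW. Qed.

Lemma tid_mul (R : realType) b c n' (X : tensor R b c n'.+1) :
  tprod (@tid R b n'.+1) X = X.
Proof.
apply: funext => p; rewrite /tprod (bigD1 p) //= big1 ?addr0.
  by rewrite /tid subo_Zp subrr /= mul1mx.
move=> q qp; rewrite /tid; case: ifP => [/eqP h|_]; last by rewrite mul0mx.
exfalso; have h' : subo p q = 0 by apply: val_inj.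
by move: qp; rewrite eq_sym -subr_eq0 -subo_Zp h' eqxx.
Qed.

Lemma tprodA (R : realType) a b c d n' (A : tensor R a b n'.+1)
  (B : tensor R b c n'.+1) (C : tensor R c d n'.+1) :
  tprod A (tprod B C) = tprod (tprod A B) C.
Proof.
apply: funext => p; rewrite /tprod.
under eq_bigr do rewrite mulmx_sumr.
rewrite exchange_big /=.
under [RHS]eq_bigr do rewrite mulmx_suml.
apply: eq_bigr => r _; rewrite (reindex_inj (addIr r)) /=.
apply: eq_bigr => s _; rewrite !subo_Zp mulmxA addrK.
by rewrite opprD addrA addrAC.
Qed.

Lemma tprod_subl (R : realType) a b c n (A B : tensor R a b n) (X : tensor R b c n) :
  tprod (tsub A B) X = fun p => tprod A X p - tprod B X p.
Proof.
apply: funext => p; rewrite /tprod /tsub -sumrB; apply: eq_bigr => q _.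
by rewrite mulmxBl.
Qed.

Lemma tprod_scalel (R : realType) a b c n (k : R) (A : tensor R a b n) (X : tensor R b c n) :
  tprod (tscale k A) X = fun p => k *: tprod A X p.
Proof.
apply: funext => p; rewrite /tprod /tscale scaler_sumr; apply: eq_bigr => q _.
by rewrite scalemxAl.
Qed.

Lemma tprod_scaler (R : realType) a b c n (k : R) (A : tensor R a b n) (X : tensor R b c n) :
  tprod A (fun q => k *: X q) = fun p => k *: tprod A X p.
Proof.
apply: funext => p; rewrite /tprod scaler_sumr; apply: eq_bigr => q _.
by rewrite scalemxAr.
Qed.

Lemma tprod_subr (R : realType) a b c n (A : tensor R a b n) (X Y : tensor R b c n) :
  tprod A (fun q => X q - Y q) = fun p => tprod A X p - tprod A Y p.
Proof.
apply: funext => p; rewrite /tprod -sumrB; apply: eq_bigr => q _.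
by rewrite mulmxBr.
Qed.

Lemma tprod_sumr (R : realType) a b c n m (A : tensor R a b n) (F : 'I_m -> tensor R b c n) :
  tprod A (fun q => \sum_(j < m) F j q) = fun p => \sum_(j < m) tprod A (F j) p.
Proof.
apply: funext => p; rewrite /tprod.
under eq_bigr do rewrite mulmx_sumr.
by rewrite exchange_big.
Qed.

Lemma bigtadd (R : realType) a b n m (F : 'I_m -> tensor R a b n) :
  \big[@tadd R a b n/@tzero R a b n]_(j < m) F j = fun k => \sum_(j < m) F j k.
Proof.
apply: funext => k.
by rewrite (big_morph (fun X : tensor R a b n => X k) (id1 := 0) (op1 := +%R)).
Qed.

Lemma slice_sum (R : realType) a b c n' t (A : tensor R a b n'.+1) (Y : tensor R b c n'.+1) :
  (fun p => \sum_(j < n'.+1) tprod (tslice A ((t + n'.+1 - j) %% n'.+1)%N) Y p) = tprod A Y.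
Proof.
apply: funext => p.
under eq_bigr do rewrite -valZp_sub.
rewrite (reindex_inj (subrI (inZp t))).
under eq_bigr do rewrite subKr.
rewrite /tprod exchange_big /=; apply: eq_bigr => q _.
rewrite (bigD1 (subo p q)) //= /tslice eqxx big1 ?addr0 // => k hk.
have -> : (nat_of_ord (subo p q) == nat_of_ord k) = false.
  by apply/negbTE; rewrite eq_sym.
by rewrite mul0mx.
Qed.
Lemma le_sum_term (R : realType) (I : finType) (F : I -> R) j :
  (forall i, 0 <= F i) -> F j <= \sum_i F i.
Proof. by move=> h; rewrite (bigD1 j) //= lerDl sumr_ge0. Qed.

Lemma entry_le_frob2 (R : realType) a b n (X : tensor R a b n) k i j :
  X k i j ^+ 2 <= frob2 X.
Proof.
rewrite frob2_flat; apply: (le_sum_term (F := fun p : 'I_n * ('I_a * 'I_b) =>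
  X p.1 p.2.1 p.2.2 ^+ 2) (k, (i, j))) => p; exact: sqr_ge0.
Qed.

Lemma tprodE (R : realType) a b c n (C : tensor R a b n) (X : tensor R b c n) k i j :
  tprod C X k i j = \sum_(q < n) \sum_(l < b) C (subo k q) i l * X q l j.
Proof. by rewrite /tprod summxE; apply: eq_bigr => q _; rewrite mxE. Qed.

Definition topset (R : realType) a b n (C : tensor R a b n) :=
  [set r : R | exists X : tensor R b 1 n,
         frob2 X = 1 /\ r = Num.sqrt (frob2 (tprod C X))].

Lemma topset_ub (R : realType) a b n (C : tensor R a b n) : has_ubound (topset C).
Proof.
set T := \sum_(m < n) \sum_(i < a) \sum_(l < b) `|C m i l|.
exists (Num.sqrt (\sum_(k < n) \sum_(i < a) \sum_(j < 1)
          (\sum_(q < n) \sum_(l < b) T) ^+ 2)).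
move=> r [X [X1 ->]]; apply: ler_wsqrtr.
apply: ler_sum => k _; apply: ler_sum => i _; apply: ler_sum => j _.
have hT : 0 <= T by do 3 (apply: sumr_ge0 => ? _); exact: normr_ge0.
rewrite -real_normK ?num_real //; apply: lerXn2r.
- by rewrite nnegrE.
- by rewrite nnegrE; do 2 (apply: sumr_ge0 => ? _).
rewrite tprodE; apply: le_trans (ler_norm_sum _ _ _) _.
apply: ler_sum => q _; apply: le_trans (ler_norm_sum _ _ _) _.
apply: ler_sum => l _; rewrite normrM.
have hX : `|X q l j| <= 1.
  have h1 := entry_le_frob2 X q l j; rewrite X1 -real_normK ?num_real // in h1.
  have h0 := normr_ge0 (X q l j); nra.
have hC : `|C (subo k q) i l| <= T.
  apply: le_trans (le_sum_term (F := fun m => \sum_(i < a) \sum_(l < b) `|C m i l|) (subo k q) _) => //.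
    apply: le_trans (le_sum_term (F := fun i => \sum_(l < b) `|C (subo k q) i l|) i _) => //.
      apply: (le_sum_term (F := fun l => `|C (subo k q) i l|) l) => ?; exact: normr_ge0.
    by move=> ?; apply: sumr_ge0 => ? _; exact: normr_ge0.
  by move=> ?; do 2 (apply: sumr_ge0 => ? _); exact: normr_ge0.
have := normr_ge0 (C (subo k q) i l); nra.
Qed.

Lemma topnorm_vec (R : realType) a b n (C : tensor R a b n) (K : R) :
  0 <= K -> topnorm C <= K -> forall x : tensor R b 1 n,
  frob2 (tprod C x) <= K ^+ 2 * frob2 x.
Proof.
move=> K0 hK x.
have [s0|spos] := eqVneq (frob2 x) 0.
  have xe : forall q l j, x q l j = 0.
    move=> q l j; apply/eqP; rewrite -sqrf_eq0; apply/eqP.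
    move: s0; rewrite frob2_flat => s0.
    exact: (psumr_eq0P (P := predT) (F := fun p : 'I_n * ('I_b * 'I_1) =>
       x p.1 p.2.1 p.2.2 ^+ 2) (fun p _ => sqr_ge0 _) s0 (i := (q, (l, j)))).
  have -> : tprod C x = fun _ => 0.
    apply: funext => p; rewrite /tprod big1 // => q _.
    have -> : x q = 0 by apply/matrixP => l j; rewrite xe mxE.
    by rewrite mulmx0.
  by rewrite frob2_zero s0 mulr0.
have s0 : 0 < frob2 x by rewrite lt_neqAle eq_sym spos frob2_ge0.
set r := Num.sqrt (frob2 x).
have r0 : 0 < r by rewrite sqrtr_gt0.
have rs : r ^+ 2 = frob2 x by rewrite sqr_sqrtr // ltW.
set x' := fun k => r^-1 *: x k.
have x'1 : frob2 x' = 1 by rewrite /x' frob2_scale -rs exprVn mulVf // expf_neq0 // gt_eqF.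
have hin : topset C (Num.sqrt (frob2 (tprod C x'))) by exists x'.
have hle := ub_le_sup (topset_ub C) hin.
have h2 : Num.sqrt (frob2 (tprod C x')) <= K by apply: le_trans hle hK.
have h3 : frob2 (tprod C x') <= K ^+ 2.
  rewrite -(sqr_sqrtr (frob2_ge0 (tprod C x'))); apply: lerXn2r => //;
  by rewrite nnegrE // sqrtr_ge0.
move: h3; rewrite /x' tprod_scaler frob2_scale => h3.
set F := frob2 (tprod C x) in h3 *.
have e : F = r ^+ 2 * ((r^-1) ^+ 2 * F).
  by rewrite mulrA -exprMn divff ?expr1n ?mul1r // gt_eqF.
rewrite e -rs mulrC; apply: ler_wpM2r => //; exact: sqr_ge0.
Qed.

Definition colT (R : realType) b c n (Y : tensor R b c n) (l : 'I_c) : tensor R b 1 n :=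
  fun k => col l (Y k).

Lemma tprod_col (R : realType) a b c n (C : tensor R a b n) (Y : tensor R b c n) l :
  tprod C (colT Y l) = colT (tprod C Y) l.
Proof.
apply: funext => p; apply/matrixP => i j.
rewrite /colT mxE tprodE tprodE; apply: eq_bigr => q _; apply: eq_bigr => m _.
by rewrite mxE.
Qed.

Lemma frob2_col (R : realType) b c n (Y : tensor R b c n) :
  \sum_(l < c) frob2 (colT Y l) = frob2 Y.
Proof.
rewrite /frob2 exchange_big; apply: eq_bigr => k _; rewrite exchange_big.
apply: eq_bigr => i _; apply: eq_bigr => l _.
by rewrite big_ord1 /colT mxE.
Qed.

Lemma topnorm_bound (R : realType) a b c n (C : tensor R a b n) (K : R) :
  0 <= K -> topnorm C <= K -> forall (Y : tensor R b c n),
  fn (tprod C Y) <= K * fn Y.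
Proof.
move=> K0 hK Y.
have h : frob2 (tprod C Y) <= K ^+ 2 * frob2 Y.
  rewrite -frob2_col -(frob2_col Y) mulr_sumr; apply: ler_sum => l _.
  rewrite -tprod_col; exact: topnorm_vec.
rewrite /fn -(ger0_norm K0) -sqrtr_sqr -sqrtrM ?sqr_ge0 //.
exact: ler_wsqrtr.
Qed.

Lemma div_cvg N : (0 < N)%N -> (fun t => (t %/ N)%N) @ \oo --> \oo.
Proof.
move=> N0 P [M _ HP]; exists (M * N)%N => // t /= hM; apply: HP => /=.
by rewrite leq_divRL.
Qed.

Lemma geo_div (R : realType) (r : R) N : (0 < N)%N -> 0 <= r -> r < 1 ->
  (fun t => r ^+ (t %/ N)) @ \oo --> 0.
Proof.
move=> N0 r0 r1.
have h := cvg_expr (z := r); rewrite ger0_norm // in h.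
exact: (cvg_comp _ _ (div_cvg N0) (h r1)).
Qed.

Lemma seq_decay (R : realType) (g : nat -> R) (k m : R) n' :
  0 <= k -> 0 <= m -> k + m * n'%:R <= 1 ->
  (forall t, 0 <= g t) ->
  (forall t, g t.+1 <= k * g t + m * \sum_(j < n') g (t - j.+1)%N) ->
  forall t, g t <= g 0%N * (k + m * n'%:R) ^+ (t %/ n'.+1).
Proof.
move=> k0 m0 rho1 g0 hrec.
set rho := k + m * n'%:R.
have rho0 : 0 <= rho by rewrite /rho addr_ge0 // mulr_ge0.
suff H : forall t s, (s <= t)%N -> g s <= g 0%N * rho ^+ (s %/ n'.+1).
  by move=> t; exact: H.
elim=> [|t IH] s.
  by rewrite leqn0 => /eqP ->; rewrite div0n expr0 mulr1.
rewrite leq_eqVlt => /orP [/eqP ->|]; last by rewrite ltnS; exact: IH.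
set e := (t.+1 %/ n'.+1)%N.
have hu : forall u, (t - n' <= u)%N -> (u <= t)%N -> g u <= g 0%N * rho ^+ e.-1.
  move=> u h1 h2; apply: le_trans (IH _ h2) _; apply: ler_wpM2l => //.
  apply: ler_wiXn2l => //.
  have -> : e.-1 = ((t.+1 - n'.+1) %/ n'.+1)%N.
    by rewrite divnBr // divnn /= subn1.
  by apply: leq_div2r; rewrite subSS.
apply: le_trans (hrec t) _.
set B := g 0%N * rho ^+ e.-1.
have hB : k * g t + m * \sum_(j < n') g (t - j.+1)%N <= rho * B.
  have h1 : k * g t <= k * B by apply: ler_wpM2l => //; apply: hu; rewrite ?leq_subr.
  have h2 : \sum_(j < n') g (t - j.+1)%N <= \sum_(j < n') B.
    apply: ler_sum => j _; apply: hu; last exact: leq_subr.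
    by apply: leq_sub2l; exact: ltn_ord.
  rewrite sumr_const card_ord -mulr_natl in h2.
  have h3 : m * \sum_(j < n') g (t - j.+1)%N <= m * (n'%:R * B) by apply: ler_wpM2l.
  rewrite /rho; lra.
apply: le_trans hB _.
rewrite /B mulrCA; apply: ler_wpM2l => //.
by case: (e) => [|e'] /=; [rewrite expr0 mulr1 | rewrite exprS].
Qed.

Lemma hist_nth (R : realType) a b c n alpha (A : tensor R a b n) (B : tensor R a c n) t j :
  nth (@tzero R b c n) (cfsd_hist alpha A B t) j =
  if (j <= t)%N then cfsd alpha A B (t - j) else @tzero R b c n.
Proof.
elim: t j => [|t IH] [|j] //=; try by rewrite nth_nil.
Qed.

Lemma tprod_tsub (R : realType) a b c n (A : tensor R a b n) (X Y : tensor R b c n) :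
  tprod A (tsub X Y) = fun p => tprod A X p - tprod A Y p.
Proof.
apply: funext => p; rewrite /tprod /tsub -sumrB; apply: eq_bigr => q _.
by rewrite mulmxBr.
Qed.

Lemma tprod_comb (R : realType) a b c d n' m (A : tensor R a b n'.+1)
  (S : 'I_m -> tensor R b c n'.+1) (Y : 'I_m -> tensor R c d n'.+1) (k : R) :
  tprod A (fun p => k *: \sum_(j < m) tprod (S j) (Y j) p) =
  fun p => k *: \sum_(j < m) tprod (tprod A (S j)) (Y j) p.
Proof.
rewrite (tprod_scaler k A (fun p => \sum_(j < m) tprod (S j) (Y j) p)).
rewrite (tprod_sumr A (fun j => tprod (S j) (Y j))).
apply: funext => p; congr (_ *: _); apply: eq_bigr => j _.
by rewrite tprodA.
Qed.

Lemma step_eq (R : realType) a b c n' alpha (A : tensor R a b n'.+1)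
  (B : tensor R a c n'.+1) (Xs : tensor R b c n'.+1) t :
  tprod A Xs = B ->
  let E s := tsub (cfsd alpha A B s) Xs in
  let cc := (inZp t : 'I_n'.+1) in
  let C (j : 'I_n'.+1) := tprod (ttr (tslice A cc)) (tslice A (cc - j)%R) in
  E t.+1 = fun p => tprod (tsub (@tid R b n'.+1) (tscale alpha (C ord0))) (E t) p
             - alpha *: \sum_(j < n') tprod (C (lift ord0 j)) (E (t - j.+1)%N) p.
Proof.
move=> hB E cc C.
have eRes : tsub B
   (fun p => \sum_(j < n'.+1) tprod (tslice A ((t + n'.+1 - j) %% n'.+1)%N)
          (nth (@tzero R b c n'.+1) (cfsd_hist alpha A B t) j) p) =
   fun p => (-1) *: \sum_(j < n'.+1) tprod (tslice A (cc - j)%R) (E (t - j)%N) p.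
  rewrite -{1}hB -(slice_sum t A Xs).
  apply: funext => q; rewrite /tsub /= -sumrB scaleN1r -sumrN; apply: eq_bigr => j _.
  rewrite -valZp_sub -/cc.
  have -> : E (t - j)%N = tsub (nth (@tzero R b c n'.+1) (cfsd_hist alpha A B t) j) Xs.
    rewrite hist_nth /E; case: ifP => // hj.
    have -> : (t - j)%N = 0%N by apply/eqP; rewrite subn_eq0 ltnW // ltnNge hj.
    by [].
  by rewrite tprod_tsub /= opprB.
apply: funext => p.
rewrite /E [cfsd _ _ _ t.+1]/cfsd /= /cfsd_step bigtadd eRes tprod_comb.
change (t %% n'.+1)%N with (nat_of_ord cc).
rewrite tprod_subl tid_mul tprod_scalel /tsub /tadd /tscale; cbv beta.
rewrite big_ord_recl scaleN1r scalerN scalerDr opprD [LHS]addrAC addrA.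
rewrite (_ : (t - @nat_of_ord n'.+1 ord0)%N = t); last by rewrite subn0.
reflexivity.
Qed.

Theorem theorem1 (R : realType) (n1 n2 n3 n : nat)
  (A : tensor R n1 n2 n) (B : tensor R n1 n3 n) (Xs : tensor R n2 n3 n)
  (alpha : R) :
  tprod A Xs = B ->
  (forall Y : tensor R n2 n3 n, tprod A Y = B -> Y = Xs) ->
  0 < alpha ->
  kappa alpha A + alpha * mu A * (n - 1)%N%:R < 1 ->
  frob2 (tsub (cfsd alpha A B t) Xs) @[t --> \oo] --> 0.
Proof.
move=> hB _ alpha0 hrho.
case: n => [|n'] in A B Xs hB hrho *.
  have -> : (fun t => frob2 (tsub (cfsd alpha A B t) Xs)) = fun _ => 0.
    by apply: funext => t; rewrite /frob2 big_ord0.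
  first [exact: (@cvg_cst _ (0:R) nat \oo _) | apply: (@cvg_cst R^o) | apply: cvg_near_cst; exact: nearW].
set kap := kappa alpha A; set m := mu A.
have kap0 : 0 <= kap.
  by rewrite /kap /kappa; elim/big_rec: _ => // i x _ hx; rewrite le_max hx orbT.
have m0 : 0 <= m.
  by rewrite /m /mu; elim/big_rec: _ => // i x _ hx; rewrite le_max hx orbT.
rewrite subn1 /= in hrho.
set E := fun s => tsub (cfsd alpha A B s) Xs.
set g := fun s => fn (E s).
have rec : forall t, g t.+1 <= kap * g t + (alpha * m) * \sum_(j < n') g (t - j.+1)%N.
  move=> t; have e := step_eq alpha t hB; cbv zeta in e.
  rewrite /g /E e; eapply le_trans; first (apply: fn_comb; exact: ltW).
  apply: lerD.
    apply: topnorm_bound => //.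
    rewrite subr0 /kap /kappa.
    exact: (le_bigmax _ (fun i : 'I_n'.+1 => topnorm (tsub (@tid R n2 n'.+1)
       (tscale alpha (tprod (ttr (tslice A i)) (tslice A i))))) (inZp t)).
  rewrite -mulrA; apply: ler_wpM2l; first exact: ltW.
  rewrite mulr_sumr; apply: ler_sum => j _; apply: topnorm_bound => //.
  rewrite /m /mu.
  apply: le_trans _ (le_bigmax _ _ (inZp t)).
  apply: (le_bigmax_cond 0 (j := (inZp t - lift ord0 j)%R) (P := fun j0 => inZp t != j0)
     (fun j0 : 'I_n'.+1 => topnorm (tprod (ttr (tslice A (inZp t))) (tslice A j0)))).
  apply/negP => /eqP h.
  have h2 := subKr (inZp t : 'I_n'.+1) (lift ord0 j).
  rewrite -h subrr in h2.
  by move: (congr1 val h2).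
rewrite -/kap -/m in hrho.
set rho := kap + alpha * m * n'%:R.
have dec := seq_decay kap0 (mulr_ge0 (ltW alpha0) m0) (ltW hrho) (fun t => fn_ge0 (E t)) rec.
have rho0 : 0 <= rho by rewrite /rho addr_ge0 // !mulr_ge0 // ltW.
apply: (@squeeze_cvgr _ _ _ _ (fun _ => 0) (fun t => g 0%N ^+ 2 * (rho ^+ 2) ^+ (t %/ n'.+1))).
- apply: nearW => t /=; rewrite frob2_ge0 /=.
  change (frob2 (E t) <= g 0%N ^+ 2 * (rho ^+ 2) ^+ (t %/ n'.+1)).
  have -> : frob2 (E t) = g t ^+ 2 by rewrite /g /fn sqr_sqrtr // frob2_ge0.
  rewrite exprAC -exprMn; apply: lerXn2r; rewrite ?nnegrE ?fn_ge0 //.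
    by rewrite mulr_ge0 ?fn_ge0 // exprn_ge0.
  exact: dec.
- first [exact: (@cvg_cst _ (0:R) nat \oo _) | apply: (@cvg_cst R^o) | apply: cvg_near_cst; exact: nearW].
- rewrite -(mulr0 (g 0%N ^+ 2)); apply: cvgMl_tmp; apply: geo_div => //.
    exact: sqr_ge0.
  have := ler_wpM2l rho0 (ltW hrho); rewrite mulr1 -expr2 => h.
  exact: le_lt_trans h hrho.
Qed.
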